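(* Let $\mathbf{A}\in\{0,1\}^{m\times n}$ be the bi-adjacency matrix of a $(2,d,\epsilon)$-expander with $\epsilon\le 1/4$. Let $\mathbf{x},\mathbf{x}'\in\mathbb{R}^n$ satisfy $\mathbf{A}\mathbf{x}=\mathbf{A}\mathbf{x}'$ and $\|\mathbf{x}'\|_1\le\|\mathbf{x}\|_1$. Let $S=\{s\}$ where $s$ is an index of a largest-in-magnitude entry of $\mathbf{x}$. Then $$\|\mathbf{x}'-\mathbf{x}\|_1\le f(\epsilon)\,\|\mathbf{x}_{S^c}\|_1,\qquad f(\epsilon)=\frac{2(1+2\epsilon)}{1-2\epsilon}.$$
   Context: A bipartite graph $G(X,Y,H)$ has vertex classes $X$ (left) and $Y$ (right) and edge set $H\subset X\times Y$. Its bi-adjacency matrix is the $|Y|\times|X|$ $0/1$ matrix whose column $j$ corresponds to left vertex $j$, row $i$ to right vertex $i$, with entry $1$ iff adjacent. A left $d$-regular bipartite graph (every left vertex has degree $d$) is a $(\phi,d,\epsilon)$-expander if every $\Phi\subset X$ with $|\Phi|\le\phi$ satisfies $|N(\Phi)|\ge(1-\epsilon)d|\Phi|$, where $N(\Phi)$ is the set of neighbours of $\Phi$. For $S\subset\{1,\dots,n\}$, $\mathbf{x}_S\in\mathbb{R}^n$ agrees with $\mathbf{x}$ on $S$ and is $0$ elsewhere; $S^c$ is the complement. *)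

(* Defs.v *)
(* the statement is purely algebraic/order-theoretic over the
   reals, so we state it for an arbitrary real field R. *)
From HB Require Import structures.
From mathcomp Require Import all_boot all_order all_algebra.
Set Implicit Arguments. Unset Strict Implicit. Unset Printing Implicit Defensive.
Import Order.TTheory GRing.Theory Num.Theory.
Local Open Scope ring_scope.

(* Bi-adjacency matrix A : 'M_(m, n): column j = left vertex j ('I_n),
   row i = right vertex i ('I_m).  Entries are 0/1. *)
Definition is01 (R : ringType) m n (A : 'M[R]_(m, n)) : Prop :=
  forall i j, A i j = 0 \/ A i j = 1.

Definition nbhd (R : ringType) m n (A : 'M[R]_(m, n)) (Phi : {set 'I_n})
  : {set 'I_m} := [set i | [exists j in Phi, A i j != 0]].

Definition left_regular (R : ringType) m n (A : 'M[R]_(m, n)) (d : nat) : Prop :=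
  forall j : 'I_n, #|nbhd A [set j]| = d.

Definition expander (R : realFieldType) m n (A : 'M[R]_(m, n))
  (phi d : nat) (eps : R) : Prop :=
  left_regular A d /\
  forall Phi : {set 'I_n}, (#|Phi| <= phi)%N ->
    (1 - eps) * d%:R * (#|Phi|)%:R <= (#|nbhd A Phi|)%:R.

Definition norm1 (R : realFieldType) n (x : 'cV[R]_n) : R :=
  \sum_(j < n) `|x j 0|.

Definition restr (R : ringType) n (x : 'cV[R]_n) (S : {set 'I_n}) : 'cV[R]_n :=
  \col_j (if j \in S then x j 0 else 0).

Definition fexp (R : realFieldType) (eps : R) : R :=
  2 * (1 + 2 * eps) / (1 - 2 * eps).

(* Main.v *)
Require Import Defs.
From HB Require Import structures.
From mathcomp Require Import all_boot all_order all_algebra.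
From mathcomp Require Import ring lra.
Import Order.TTheory GRing.Theory Num.Theory.
Local Open Scope ring_scope.

Section S.
Variables (R : realFieldType) (m n d : nat) (A : 'M[R]_(m, n)) (eps : R).
Hypothesis A01 : is01 A.
Hypothesis Hexp : expander A 2 d eps.

Lemma in_nb1 i j : (i \in nbhd A [set j]) = (A i j != 0).
Proof.
rewrite inE; apply/existsP/idP => [[k /andP[] /[!inE] /eqP -> //]|H].
by exists j; rewrite inE eqxx.
Qed.

Lemma nbU j k : nbhd A [set j; k] = nbhd A [set j] :|: nbhd A [set k].
Proof.
apply/setP => i; rewrite in_setU !in_nb1 inE.
apply/existsP/orP => [[l /andP[] /[!inE] /orP[] /eqP -> ->]|[]H]; auto.
by exists j; rewrite !inE eqxx H.
by exists k; rewrite !inE eqxx orbT H.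
Qed.

Lemma inter_bound j k : j != k ->
  (#|nbhd A [set j] :&: nbhd A [set k]|)%:R <= 2 * eps * d%:R.
Proof.
move=> jk; case: Hexp => Hreg Hex.
have := Hex [set j; k]; rewrite cards2 jk /= => /(_ isT).
rewrite nbU.
have := cardsUI (nbhd A [set j]) (nbhd A [set k]).
rewrite !Hreg => /(congr1 (fun n : nat => n%:R : R)); rewrite !natrD => E.
lra.
Qed.

Lemma absA i j : `|A i j| = (A i j != 0)%:R.
Proof. by case: (A01 i j) => ->; rewrite ?normr0 ?normr1 ?eqxx ?oner_eq0. Qed.

Lemma sum_card s j :
  \sum_(i in nbhd A [set s]) ((A i j != 0)%:R : R) = (#|nbhd A [set s] :&: nbhd A [set j]|)%:R.
Proof.
rewrite (eq_bigr (fun i => if A i j != 0 then 1 else 0)); last by move=> i _; case: (_ != 0).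
rewrite -big_mkcondr /= sumr_const; congr (_ *+ _).
apply: eq_card => i; rewrite in_setI !in_nb1 /=.
by rewrite unfold_in /= in_nb1.
Qed.

Lemma row_bound (h : 'cV[R]_n) s i : A *m h = 0 -> A i s != 0 ->
  `|h s 0| <= \sum_(j | j != s) (A i j != 0)%:R * `|h j 0|.
Proof.
move=> Ah Ais.
have E : (A *m h) i 0 = 0 by rewrite Ah mxE.
rewrite mxE (bigD1 s) //= in E.
have As1 : A i s = 1 by case: (A01 i s) Ais => ->; rewrite ?eqxx.
rewrite As1 mul1r in E.
have -> : h s 0 = - \sum_(j | j != s) A i j * h j 0 by apply/eqP; rewrite -subr_eq0 opprK E.
rewrite normrN; apply: le_trans (ler_norm_sum _ _ _) _.
by apply: ler_sum => j _; rewrite normrM absA.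
Qed.

Lemma key (h : 'cV[R]_n) s : (0 < d)%N -> A *m h = 0 ->
  `|h s 0| <= 2 * eps * \sum_(j | j != s) `|h j 0|.
Proof.
move=> d0 Ah; case: Hexp => Hreg _.
have H1 : d%:R * `|h s 0| <= \sum_(i in nbhd A [set s]) \sum_(j | j != s) (A i j != 0)%:R * `|h j 0|.
  rewrite -(Hreg s) mulr_natl -sumr_const.
  by apply: ler_sum => i; rewrite in_nb1 => Ais; apply: row_bound.
rewrite exchange_big /= in H1.
have H2 : \sum_(j | j != s) \sum_(i in nbhd A [set s]) ((A i j != 0)%:R : R) * `|h j 0|
   <= \sum_(j | j != s) (2 * eps * d%:R) * `|h j 0|.
  apply: ler_sum => j js; rewrite -mulr_suml sum_card; apply: ler_wpM2r => //.
  by apply: inter_bound; rewrite eq_sym.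
rewrite -mulr_sumr in H2.
have dp : 0 < (d%:R : R) by rewrite ltr0n.
rewrite -(ler_pM2l dp); apply: le_trans (le_trans H1 H2) _.
by rewrite le_eqVlt; apply/orP; left; apply/eqP; ring.
Qed.
End S.

Lemma norm1D (R : realFieldType) n (v : 'cV[R]_n) s :
  norm1 v = `|v s 0| + \sum_(j | j != s) `|v j 0|.
Proof. by rewrite /norm1 (bigD1 s). Qed.

Theorem theorem2 (R : realFieldType) (m n d : nat) (A : 'M[R]_(m, n))
  (eps : R) (x x' : 'cV[R]_n) (s : 'I_n) :
  is01 A -> (0 < d)%N -> expander A 2 d eps -> eps <= 1 / 4 ->
  A *m x = A *m x' -> norm1 x' <= norm1 x ->
  (forall j : 'I_n, `|x j 0| <= `|x s 0|) ->
  norm1 (x' - x) <= fexp eps * norm1 (restr x (~: [set s])).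
Proof.
move=> A01 d0 Hexp e14 Axx' Hn _.
set h := x' - x.
have Ah : A *m h = 0 by rewrite mulmxBr Axx' subrr.
have K := @key R m n d A eps A01 Hexp h s d0 Ah.
have Er : norm1 (restr x (~: [set s])) = \sum_(j | j != s) `|x j 0|.
  rewrite (norm1D _ _ _ s) mxE !inE eqxx /= normr0 add0r.
  by apply: eq_bigr => j js; rewrite mxE !inE js.
have Ex' : x' = x + h by rewrite /h addrC subrK.
clearbody h.
rewrite Er (norm1D _ _ _ s); rewrite Ex' !(norm1D _ _ _ s) in Hn.
set Hr := \sum_(j | j != s) `|h j 0|.
set Xr := \sum_(j | j != s) `|x j 0|.
have T1 : Hr - Xr <= \sum_(j | j != s) `|(x + h) j 0|.
  rewrite /Hr /Xr -sumrB; apply: ler_sum => j _; rewrite mxE.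
  by rewrite addrC lerB_normD.
have T2 : `|x s 0| - `|h s 0| <= `|(x + h) s 0|.
  by rewrite mxE lerB_normD.
have Hr0 : 0 <= Hr by apply: sumr_ge0 => j _.
have Xr0 : 0 <= Xr by apply: sumr_ge0 => j _.
have Hs0 : 0 <= `|h s 0| by [].
have P : 0 < 1 - 2 * eps by lra.
have K' : `|h s 0| <= 2 * eps * Hr by [].
have Hn' : `|(x + h) s 0| + \sum_(j | j != s) `|(x + h) j 0| <= `|x s 0| + Xr by [].
move: K' Hn' T1 T2 Hr0 Xr0; clear K Hn Er.
move: (\sum_(j | j != s) `|(x + h) j 0|) => Y; clearbody Hr Xr.
move=> K' Hn' T1 T2 Hr0 Xr0.
have e0 : 0 <= eps.
  case: Hexp => Hreg Hex; have := Hex [set s]; rewrite cards1 Hreg => /(_ isT).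
  have dp : 0 < (d%:R : R) by rewrite ltr0n.
  move=> H; nra.
have L1 : (1 - 2 * eps) * Hr <= 2 * Xr by lra.
have L2 : (1 - 2 * eps) * `|h s 0| <= (1 - 2 * eps) * (2 * eps * Hr) by rewrite ler_pM2l.
have L3 : (1 + 2 * eps) * ((1 - 2 * eps) * Hr) <= (1 + 2 * eps) * (2 * Xr) by rewrite ler_wpM2l //; lra.
rewrite /fexp mulrAC ler_pdivlMr //.
nra.
Qed.
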